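(* Let $X$ be a (complete) doubling metric measure space and let $E\subset X$ be a closed set. Then $\overline{\operatorname{co\,dim}}_A(E)$ equals the infimum of all $q\ge0$ for which there exists $C>0$ such that \[\mathcal H^{\mu,q}_R\big(E\cap B(w,R)\big)\ge C\,R^{-q}\mu(B(w,R))\] for every $w\in E$ and all $0<R<\operatorname{diam}(E)$.
   Context: $(X,d,\mu)$ is a complete metric space with a Borel measure $\mu$ such that every closed ball $B(x,r)=\{y:d(x,y)\le r\}$, $r>0$, has $0<\mu(B(x,r))<\infty$, and $\mu$ is doubling. For $E\subset X$ and $r>0$, $E_r=\{x\in X:\operatorname{dist}(x,E)<r\}$. The upper Assouad codimension $\overline{\operatorname{co\,dim}}_A(E)$ is the infimum of all $s\ge0$ for which there is $c>0$ such that $\frac{\mu(E_r\cap B(x,R))}{\mu(B(x,R))}\ge c(r/R)^s$ for every $x\in E$ and all $0<r<R<\operatorname{diam}(E)$. For $q\ge0$ and $R>0$, the Hausdorff content of codimension $q$ is $\mathcal H_R^{\mu,q}(A)=\inf\{\sum_k\operatorname{rad}(B_k)^{-q}\mu(B_k): A\subset\bigcup_k B_k,\ \operatorname{rad}(B_k)\le R\}$, the infimum over countable covers by balls. *)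

(* Defs.v *)
From Stdlib Require Import Reals.
Open Scope R_scope.

Inductive Rbar : Type := Finite (x : R) | p_infty.

Definition Rbar_le (a b : Rbar) : Prop :=
  match a, b with
  | _, p_infty => True
  | p_infty, Finite _ => False
  | Finite x, Finite y => x <= y
  end.

(** Real part (used only on values known to be finite). *)
Definition real (a : Rbar) : R := match a with Finite x => x | p_infty => 0 end.

Definition Rbar_series (f : nat -> Rbar) (v : Rbar) : Prop :=
  (exists l, v = Finite l /\ (forall n, f n = Finite (real (f n)))
      /\ infinite_sum (fun n => real (f n)) l)
  \/ (v = p_infty /\
      ((exists n, f n = p_infty) \/
       ((forall n, f n = Finite (real (f n))) /\
        ~ (exists l, infinite_sum (fun n => real (f n)) l)))).

Section Metric.
Variable X : Type.
Variable d : X -> X -> R.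

Definition is_metric : Prop :=
  (forall x y, 0 <= d x y) /\ (forall x y, d x y = 0 <-> x = y) /\
  (forall x y, d x y = d y x) /\ (forall x y z, d x z <= d x y + d y z).

Definition complete : Prop :=
  forall u : nat -> X,
    (forall eps, 0 < eps -> exists N, forall m n, (N <= m)%nat -> (N <= n)%nat -> d (u m) (u n) < eps) ->
    exists l, forall eps, 0 < eps -> exists N, forall n, (N <= n)%nat -> d (u n) l < eps.

Definition ball (x : X) (r : R) : X -> Prop := fun y => d x y <= r.

Definition open (U : X -> Prop) : Prop :=
  forall x, U x -> exists r, 0 < r /\ forall y, d x y < r -> U y.

Definition closed (E : X -> Prop) : Prop := open (fun x => ~ E x).

Inductive borel : (X -> Prop) -> Prop :=
  | borel_open : forall U, open U -> borel U
  | borel_compl : forall A, borel A -> borel (fun x => ~ A x)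
  | borel_union : forall A : nat -> X -> Prop, (forall n, borel (A n)) ->
                    borel (fun x => exists n, A n x).

Definition is_borel_measure (mu : (X -> Prop) -> Rbar) : Prop :=
  (forall A, borel A -> Rbar_le (Finite 0) (mu A)) /\
  mu (fun _ => False) = Finite 0 /\
  (forall A : nat -> X -> Prop, (forall n, borel (A n)) ->
     (forall m n x, m <> n -> A m x -> A n x -> False) ->
     Rbar_series (fun n => mu (A n)) (mu (fun x => exists n, A n x))).

Definition balls_pos_fin (mu : (X -> Prop) -> Rbar) : Prop :=
  forall x r, 0 < r -> exists v, mu (ball x r) = Finite v /\ 0 < v.

Definition doubling (mu : (X -> Prop) -> Rbar) : Prop :=
  exists Cd, forall x r, 0 < r -> Rbar_le (mu (ball x (2 * r))) (Finite (Cd * real (mu (ball x r)))).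

Definition nbhd (E : X -> Prop) (r : R) : X -> Prop :=
  fun x => exists y, E y /\ d x y < r.

(** R < diam(E) (diam E = sup of distances, possibly infinite). *)
Definition lt_diam (R0 : R) (E : X -> Prop) : Prop :=
  exists x y, E x /\ E y /\ R0 < d x y.

(** Upper Assouad codimension: the set of admissible exponents s. *)
Definition assouad_exps (mu : (X -> Prop) -> Rbar) (E : X -> Prop) : R -> Prop :=
  fun s => 0 <= s /\ exists c, 0 < c /\
    forall x r R0, E x -> 0 < r -> r < R0 -> lt_diam R0 E ->
      (* mu(E_r ∩ B(x,R)) / mu(B(x,R)) >= c (r/R)^s, with 0 < mu(B(x,R)) < oo *)
      Rbar_le (Finite (c * Rpower (r / R0) s * real (mu (ball x R0))))
              (mu (fun y => nbhd E r y /\ ball x R0 y)).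

(** Value of a countable (possibly finite) cover by balls: [None] entries
    are unused indices.  Sum of rad(B_k)^(-q) mu(B_k). *)
Definition cover_term (mu : (X -> Prop) -> Rbar) (q : R) (b : option (X * R)) : Rbar :=
  match b with
  | None => Finite 0
  | Some (x, r) => Finite (Rpower r (- q) * real (mu (ball x r)))
  end.

Definition admissible_cover (A : X -> Prop) (R0 : R) (b : nat -> option (X * R)) : Prop :=
  (forall k x r, b k = Some (x, r) -> 0 < r /\ r <= R0) /\
  (forall y, A y -> exists k x r, b k = Some (x, r) /\ ball x r y).

(** [hcontent_ge mu q R0 A v]:  H^{mu,q}_{R0}(A) >= v, i.e. v is a lower bound
    of the sums over all admissible covers (divergent sums are +infinity). *)
Definition hcontent_ge (mu : (X -> Prop) -> Rbar) (q R0 : R) (A : X -> Prop) (v : R) : Prop :=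
  forall b S, admissible_cover A R0 b -> Rbar_series (fun k => cover_term mu q (b k)) S ->
    Rbar_le (Finite v) S.

Definition content_exps (mu : (X -> Prop) -> Rbar) (E : X -> Prop) : R -> Prop :=
  fun q => 0 <= q /\ exists C, 0 < C /\
    forall w R0, E w -> 0 < R0 -> lt_diam R0 E ->
      hcontent_ge mu q R0 (fun y => E y /\ ball w R0 y)
                  (C * Rpower R0 (- q) * real (mu (ball w R0))).

End Metric.

Definition is_glb (P : R -> Prop) (m : R) : Prop :=
  (forall x, P x -> m <= x) /\ (forall m', (forall x, P x -> m' <= x) -> m' <= m).

(* Main.v *)
Require Import Defs.
From Stdlib Require Import Reals Lra Lia ZArith List Classical ClassicalEpsilon FunctionalExtensionality PropExtensionality.
Open Scope R_scope.

Lemma set_ext {X} (A B : X -> Prop) : (forall x, A x <-> B x) -> A = B.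
Proof. intro H; apply functional_extensionality; intro x; apply propositional_extensionality; auto. Qed.

Section S.
Variable X : Type.
Variable d : X -> X -> R.
Variable mu : (X -> Prop) -> Rbar.
Hypothesis Hd : is_metric X d.
Hypothesis Hmu : is_borel_measure X d mu.
Hypothesis HbF : balls_pos_fin X d mu.

Lemma d_nn x y : 0 <= d x y. Proof. apply Hd. Qed.
Lemma d_sym x y : d x y = d y x. Proof. apply Hd. Qed.
Lemma d_tri x y z : d x z <= d x y + d y z. Proof. apply Hd. Qed.
Lemma d_refl x : d x x = 0. Proof. apply Hd; auto. Qed.

Lemma borel_ext A B : borel X d A -> (forall x, A x <-> B x) -> borel X d B.
Proof. intros HA H; rewrite <- (set_ext A B H); auto. Qed.

Lemma borel_U2 A B : borel X d A -> borel X d B -> borel X d (fun x => A x \/ B x).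
Proof.
  intros HA HB.
  apply borel_ext with (fun x => exists n, (match n with 0%nat => A | _ => B end) x).
  - apply borel_union. intros [|n]; auto.
  - intro x; split. intros [[|n] H]; auto. intros [H|H]; [exists 0%nat|exists 1%nat]; auto.
Qed.

Lemma borel_C A : borel X d A -> borel X d (fun x => ~ A x).
Proof. intro; apply borel_compl; auto. Qed.

Lemma borel_I A B : borel X d A -> borel X d B -> borel X d (fun x => A x /\ B x).
Proof.
  intros HA HB.
  apply borel_ext with (fun x => ~ (~ A x \/ ~ B x)).
  - apply borel_C, borel_U2; apply borel_C; auto.
  - intro x; split. intro H; split; apply NNPP; tauto. tauto.
Qed.

Lemma borel_D A B : borel X d A -> borel X d B -> borel X d (fun x => A x /\ ~ B x).
Proof. intros; apply borel_I; auto; apply borel_C; auto. Qed.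

Lemma borel_empty : borel X d (fun _ => False).
Proof. apply borel_open. intros x []. Qed.

Lemma borel_ball x r : borel X d (ball X d x r).
Proof.
  apply borel_ext with (fun y => ~ ~ ball X d x r y).
  - apply borel_C, borel_open. intros y Hy. unfold ball in Hy.
    exists (d x y - r). split. lra. intros z Hz. unfold ball.
    pose proof (d_tri x z y). rewrite (d_sym z y) in H. lra.
  - intro; split; [apply NNPP| tauto].
Qed.

Lemma borel_nbhd E r : borel X d (nbhd X d E r).
Proof.
  apply borel_open. intros y [e [He Hye]].
  exists (r - d y e). split. lra. intros z Hz. exists e; split; auto.
  pose proof (d_tri z y e). rewrite (d_sym z y) in H. lra.
Qed.

Lemma mu_empty : mu (fun _ => False) = Finite 0. Proof. apply Hmu. Qed.

Definition seq2 (A B : X -> Prop) (n : nat) : X -> Prop :=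
  match n with 0%nat => A | 1%nat => B | _ => fun _ => False end.

Lemma seq2_series A B : borel X d A -> borel X d B -> (forall x, A x -> B x -> False) ->
  Rbar_series (fun n => mu (seq2 A B n)) (mu (fun x => A x \/ B x)).
Proof.
  intros HA HB Hdis.
  replace (fun x => A x \/ B x) with (fun x => exists n, seq2 A B n x).
  - apply Hmu.
    + intros [|[|n]]; simpl; auto using borel_empty.
    + intros [|[|m]] [|[|n]] x Hmn; simpl; try tauto; try (intros; eapply Hdis; eauto; fail).
  - apply set_ext; intro x; split.
    + intros [[|[|n]] H]; simpl in H; tauto.
    + intros [H|H]; [exists 0%nat|exists 1%nat]; auto.
Qed.

Lemma sum2_cv (g : nat -> R) a b : g 0%nat = a -> g 1%nat = b -> (forall n, g (S (S n)) = 0) ->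
  infinite_sum g (a + b).
Proof.
  intros H0 H1 H2. intros eps Heps. exists 1%nat. intros n Hn.
  assert (forall k, sum_f_R0 g (S k) = a + b) as Hs.
  { induction k. simpl. lra. simpl sum_f_R0 in *. rewrite H2. lra. }
  destruct n. lia. rewrite Hs. unfold Rdist. rewrite Rminus_diag, Rabs_R0. auto.
Qed.

Lemma mu_add2 A B a b : borel X d A -> borel X d B -> (forall x, A x -> B x -> False) ->
  mu A = Finite a -> mu B = Finite b -> mu (fun x => A x \/ B x) = Finite (a + b).
Proof.
  intros HA HB Hdis Ha Hb'.
  pose proof (seq2_series A B HA HB Hdis) as Hs.
  assert (Hcv : infinite_sum (fun n => real (mu (seq2 A B n))) (a + b)).
  { apply sum2_cv; simpl; [rewrite Ha|rewrite Hb'|intro; rewrite mu_empty]; reflexivity. }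
  destruct Hs as [[l [Hl [_ Hl']]] | [Hv [[n Hn] | [_ Hn]]]].
  - rewrite Hl. f_equal. eapply uniqueness_sum; eauto.
  - destruct n as [|[|n]]; simpl in Hn; try rewrite mu_empty in Hn; congruence.
  - exfalso; eauto.
Qed.

Lemma mu_add2_inf A B : borel X d A -> borel X d B -> (forall x, A x -> B x -> False) ->
  mu A = p_infty -> mu (fun x => A x \/ B x) = p_infty.
Proof.
  intros HA HB Hdis Ha.
  destruct (seq2_series A B HA HB Hdis) as [[l [Hl [Hf _]]] | [Hv _]]; auto.
  specialize (Hf 0%nat); simpl in Hf; rewrite Ha in Hf; discriminate.
Qed.

Lemma mu_nn A : borel X d A -> Rbar_le (Finite 0) (mu A).
Proof. apply Hmu. Qed.

Lemma mu_mono A B b : borel X d A -> borel X d B -> (forall x, A x -> B x) -> mu B = Finite b ->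
  exists a, mu A = Finite a /\ 0 <= a /\ a <= b.
Proof.
  intros HA HB Hsub HBb.
  assert (HBeq : B = (fun x => A x \/ (B x /\ ~ A x))).
  { apply set_ext; intro x; specialize (Hsub x); split. intro; destruct (classic (A x)); tauto. intros [H|H]; tauto. }
  assert (HD : borel X d (fun x => B x /\ ~ A x)) by (apply borel_D; auto).
  assert (Hdis : forall x, A x -> (B x /\ ~ A x) -> False) by tauto.
  pose proof (mu_nn A HA) as HnA. pose proof (mu_nn _ HD) as HnD.
  destruct (mu A) as [a|] eqn:Ea.
  - destruct (mu (fun x => B x /\ ~ A x)) as [c|] eqn:Ec.
    + pose proof (mu_add2 _ _ a c HA HD Hdis Ea Ec) as H. cbv beta in H. rewrite HBeq in HBb. rewrite HBb in H.
      inversion H. simpl in *. exists a; repeat split; lra.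
    + exfalso.
      assert (mu (fun x => (B x /\ ~ A x) \/ A x) = p_infty).
      { apply mu_add2_inf; auto. firstorder. }
      replace (fun x => (B x /\ ~ A x) \/ A x) with B in H. congruence.
      apply set_ext; intro x; specialize (Hsub x); destruct (classic (A x)); tauto.
  - exfalso. pose proof (mu_add2_inf _ _ HA HD Hdis Ea). cbv beta in H. rewrite HBeq in HBb. congruence.
Qed.


Definition mb x r := real (mu (ball X d x r)).

Lemma mb_spec x r : 0 < r -> mu (ball X d x r) = Finite (mb x r) /\ 0 < mb x r.
Proof. intro H; destruct (HbF x r H) as [v [Hv Hv']]. unfold mb; rewrite Hv; auto. Qed.

Definition subset (A B : X -> Prop) := forall y, A y -> B y.

Lemma fin_sub A x r : borel X d A -> subset A (ball X d x r) -> 0 < r ->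
  mu A = Finite (real (mu A)) /\ 0 <= real (mu A) /\ real (mu A) <= mb x r.
Proof.
  intros HA Hs Hr. destruct (mb_spec x r Hr) as [H1 H2].
  destruct (mu_mono _ _ _ HA (borel_ball x r) Hs H1) as [a [Ha [Ha1 Ha2]]].
  rewrite Ha; simpl; auto.
Qed.

Lemma m_mono A B x r : borel X d A -> borel X d B -> subset A B -> subset B (ball X d x r) -> 0 < r ->
  real (mu A) <= real (mu B).
Proof.
  intros HA HB Hs HB' Hr. destruct (fin_sub B x r HB HB' Hr) as [H1 _].
  destruct (mu_mono _ _ _ HA HB Hs H1) as [a [Ha [_ Ha2]]]. rewrite Ha; simpl; auto.
Qed.

Lemma m_nn A x r : borel X d A -> subset A (ball X d x r) -> 0 < r -> 0 <= real (mu A).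
Proof. intros; eapply fin_sub; eauto. Qed.

Lemma m_add2 A B x r : borel X d A -> borel X d B -> (forall y, A y -> B y -> False) ->
  subset A (ball X d x r) -> subset B (ball X d x r) -> 0 < r ->
  real (mu (fun y => A y \/ B y)) = real (mu A) + real (mu B).
Proof.
  intros HA HB Hdis H1 H2 Hr.
  destruct (fin_sub A x r HA H1 Hr) as [E1 _]. destruct (fin_sub B x r HB H2 Hr) as [E2 _].
  rewrite (mu_add2 _ _ _ _ HA HB Hdis E1 E2). reflexivity.
Qed.

Lemma m_sub2 A B x r : borel X d A -> borel X d B ->
  subset A (ball X d x r) -> subset B (ball X d x r) -> 0 < r ->
  real (mu (fun y => A y \/ B y)) <= real (mu A) + real (mu B).
Proof.
  intros HA HB H1 H2 Hr.
  replace (fun y => A y \/ B y) with (fun y => A y \/ (B y /\ ~ A y)).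
  - rewrite (m_add2 A (fun y => B y /\ ~ A y) x r); auto.
    + assert (real (mu (fun y => B y /\ ~ A y)) <= real (mu B)); [|lra].
      apply m_mono with x r; auto. apply borel_D; auto. intros y [? ?]; auto.
    + apply borel_D; auto.
    + tauto.
    + intros y [? ?]; auto.
  - apply set_ext; intro y; destruct (classic (A y)); tauto.
Qed.

Fixpoint lsum {T} (f : T -> R) (l : list T) : R :=
  match l with nil => 0 | a :: l' => f a + lsum f l' end.

Definition Un {T} (F : T -> X -> Prop) (l : list T) : X -> Prop :=
  fun y => exists t, In t l /\ F t y.

Lemma Un_nil {T} (F : T -> X -> Prop) : Un F nil = (fun _ => False).
Proof. apply set_ext; intro y; split. intros [t [[] _]]. intros []. Qed.

Lemma Un_cons {T} (F : T -> X -> Prop) a l : Un F (a :: l) = (fun y => F a y \/ Un F l y).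
Proof.
  apply set_ext; intro y; split.
  - intros [t [[<-|Ht] Hy]]; [left; auto| right; exists t; auto].
  - intros [H|[t [Ht Hy]]]; [exists a; simpl; auto| exists t; simpl; auto].
Qed.

Lemma borel_Un {T} (F : T -> X -> Prop) l : (forall t, In t l -> borel X d (F t)) -> borel X d (Un F l).
Proof.
  induction l as [|a l IH]; intro H.
  - rewrite Un_nil; apply borel_empty.
  - rewrite Un_cons; apply borel_U2; auto. apply H; simpl; auto. apply IH; intros; apply H; simpl; auto.
Qed.

Lemma lsum_nn {T} (f : T -> R) l : (forall t, In t l -> 0 <= f t) -> 0 <= lsum f l.
Proof. induction l; simpl; intros; auto with real. assert (0 <= f a) by auto. assert (0 <= lsum f l) by auto. lra. Qed.

Lemma lsum_le {T} (f g : T -> R) l : (forall t, In t l -> f t <= g t) -> lsum f l <= lsum g l.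
Proof. induction l; simpl; intros; auto with real. assert (f a <= g a) by auto. assert (lsum f l <= lsum g l) by auto. lra. Qed.

Lemma lsum_plus {T} (f g : T -> R) l : lsum (fun t => f t + g t) l = lsum f l + lsum g l.
Proof. induction l; simpl; lra. Qed.

Lemma lsum_scal {T} (f : T -> R) c l : lsum (fun t => c * f t) l = c * lsum f l.
Proof. induction l; simpl; lra. Qed.

Lemma lsum_In {T} (f : T -> R) l a : (forall t, In t l -> 0 <= f t) -> In a l -> f a <= lsum f l.
Proof.
  induction l; simpl; intros Hn Ha; [contradiction|].
  destruct Ha as [->|Ha].
  - assert (0 <= lsum f l) by (apply lsum_nn; auto). lra.
  - assert (0 <= f a0) by auto. assert (f a <= lsum f l) by auto. lra.
Qed.

Lemma lsum_swap {T U} (f : T -> U -> R) l1 l2 :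
  lsum (fun t => lsum (f t) l2) l1 = lsum (fun u => lsum (fun t => f t u) l1) l2.
Proof.
  induction l1; simpl.
  - induction l2; simpl; lra.
  - rewrite IHl1. clear IHl1. induction l2; simpl; lra.
Qed.

Lemma m_sub_list {T} (F : T -> X -> Prop) l x r : 0 < r ->
  (forall t, In t l -> borel X d (F t)) -> (forall t, In t l -> subset (F t) (ball X d x r)) ->
  real (mu (Un F l)) <= lsum (fun t => real (mu (F t))) l.
Proof.
  intros Hr. induction l as [|a l IH]; intros HB HS.
  - rewrite Un_nil, mu_empty. simpl; lra.
  - rewrite Un_cons. simpl.
    assert (Hl : real (mu (Un F l)) <= lsum (fun t => real (mu (F t))) l)
      by (apply IH; intros; [apply HB|apply HS]; simpl; auto).
    eapply Rle_trans. apply m_sub2 with x r.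
    + apply HB; simpl; auto.
    + apply borel_Un; intros; apply HB; simpl; auto.
    + apply HS; simpl; auto.
    + intros y [t [Ht Hy]]. apply (HS t); simpl; auto.
    + auto.
    + lra.
Qed.

Fixpoint pdisj {T} (F : T -> X -> Prop) (l : list T) : Prop :=
  match l with nil => True | a :: l' => (forall b, In b l' -> forall y, F a y -> F b y -> False) /\ pdisj F l' end.

Lemma m_disj_list {T} (F : T -> X -> Prop) l x r : 0 < r ->
  (forall t, In t l -> borel X d (F t)) -> (forall t, In t l -> subset (F t) (ball X d x r)) ->
  pdisj F l -> lsum (fun t => real (mu (F t))) l = real (mu (Un F l)).
Proof.
  intros Hr. induction l as [|a l IH]; intros HB HS HP.
  - rewrite Un_nil, mu_empty. simpl; lra.
  - rewrite Un_cons. simpl. destruct HP as [HP1 HP2].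
    rewrite (m_add2 _ _ x r).
    + rewrite IH; auto; intros; [apply HB|apply HS]; simpl; auto.
    + apply HB; simpl; auto.
    + apply borel_Un; intros; apply HB; simpl; auto.
    + intros y Hy [t [Ht Hy']]. eapply HP1; eauto.
    + apply HS; simpl; auto.
    + intros y [t [Ht Hy]]. apply (HS t); simpl; auto.
    + auto.
Qed.


Lemma nat_unbounded K : exists n : nat, K < INR n.
Proof.
  destruct (archimed K) as [H _]. destruct (Z_le_gt_dec 0%Z (up K)) as [g|g].
  - exists (Z.to_nat (up K)). rewrite INR_IZR_INZ, Z2Nat.id; auto.
  - exists 0%nat. simpl. assert (IZR (up K) < IZR 0) by (apply IZR_lt; lia). simpl in H0; lra.
Qed.

Lemma pow_ge_INR (b : R) m : 2 <= b -> INR m <= b ^ m.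
Proof.
  intro Hbb. induction m. simpl; lra.
  rewrite S_INR. simpl. assert (1 <= b ^ m) by (apply pow_R1_Rle; lra). nra.
Qed.

Lemma pow_unbounded (b : R) K : 2 <= b -> exists m : nat, K <= b ^ m.
Proof. intro Hbb. destruct (nat_unbounded K) as [n Hn]. exists n. pose proof (pow_ge_INR b n Hbb). lra. Qed.

Lemma ball_sub x y r r' : d y x + r <= r' -> subset (ball X d x r) (ball X d y r').
Proof. intros H z Hz. unfold ball in *. pose proof (d_tri y x z). lra. Qed.

Lemma mb_pos x r : 0 < r -> 0 < mb x r.
Proof. intro; apply mb_spec; auto. Qed.

Lemma mb_sub x r y r' : 0 < r -> 0 < r' -> subset (ball X d x r) (ball X d y r') -> mb x r <= mb y r'.
Proof. intros. apply m_mono with y r'; auto using borel_ball. intros z Hz; auto. Qed.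

Lemma mb_mono x r r' : 0 < r -> r <= r' -> mb x r <= mb x r'.
Proof. intros. apply mb_sub; try lra. apply ball_sub. rewrite d_refl; lra. Qed.

Variable Cd : R.
Hypothesis HCd1 : 1 <= Cd.
Hypothesis HCd : forall x r, 0 < r -> mb x (2 * r) <= Cd * mb x r.

Lemma mb_pow x r m : 0 < r -> mb x (2 ^ m * r) <= Cd ^ m * mb x r.
Proof.
  intro Hr. induction m. simpl. rewrite Rmult_1_l; lra.
  simpl. rewrite Rmult_assoc. eapply Rle_trans. apply HCd.
  assert (0 < 2 ^ m) by (apply pow_lt; lra). nra.
  rewrite Rmult_assoc. apply Rmult_le_compat_l; lra.
Qed.

Lemma dbl_le x r y r' m : 0 < r -> 0 < r' -> d y x + r <= 2 ^ m * r' -> mb x r <= Cd ^ m * mb y r'.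
Proof.
  intros H1 H2 H3. assert (0 < 2 ^ m) by (apply pow_lt; lra).
  eapply Rle_trans. apply (mb_sub x r y (2 ^ m * r')); auto. nra. apply ball_sub; auto.
  apply mb_pow; auto.
Qed.

Fixpoint sep (delta : R) (l : list X) : Prop :=
  match l with nil => True | p :: l' => (forall q, In q l' -> delta < d p q) /\ sep delta l' end.

Lemma sep_disj delta l : sep delta l -> pdisj (fun c => ball X d c (delta / 2)) l.
Proof.
  induction l; simpl; auto. intros [H1 H2]. split; auto.
  intros b Hb y Hy Hy'. unfold ball in *. specialize (H1 b Hb).
  pose proof (d_tri a y b). rewrite (d_sym y b) in H. lra.
Qed.

Lemma pack_sum delta l x D : 0 < delta -> 0 <= D -> sep delta l -> (forall c, In c l -> d x c <= D) ->
  lsum (fun c => mb c (delta / 2)) l <= mb x (D + delta / 2).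
Proof.
  intros Hdl HD Hs Hin.
  assert (Hsub : forall c, In c l -> subset (ball X d c (delta / 2)) (ball X d x (D + delta / 2))).
  { intros c Hc. apply ball_sub. specialize (Hin c Hc). lra. }
  assert (E : lsum (fun t => real (mu ((fun c => ball X d c (delta / 2)) t))) l = real (mu (Un (fun c => ball X d c (delta / 2)) l))).
  { apply (m_disj_list (fun c => ball X d c (delta / 2)) l x (D + delta/2)); try lra.
    - intros; apply borel_ball.
    - auto.
    - apply sep_disj; auto. }
  cbv beta in E. unfold mb at 1. rewrite E.
  unfold mb. apply m_mono with x (D + delta / 2); auto using borel_ball; try lra.
  - apply borel_Un; intros; apply borel_ball.
  - intros y [t [Ht Hy]]. eapply Hsub; eauto.
  - intros y Hy; auto.
Qed.

Lemma lsum_const {T} (K : R) (l : list T) : lsum (fun _ => K) l = INR (length l) * K.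
Proof. induction l; simpl. lra. rewrite IHl. destruct (length l); simpl; lra. Qed.

Lemma pack_count delta l x D m : 0 < delta -> 0 <= D -> sep delta l -> (forall c, In c l -> d x c <= D) ->
  D + (D + delta / 2) <= 2 ^ m * (delta / 2) -> INR (length l) <= Cd ^ m.
Proof.
  intros Hdl HD Hs Hin Hm.
  pose proof (pack_sum delta l x D Hdl HD Hs Hin) as H1.
  assert (H2 : lsum (fun c => mb x (D + delta / 2)) l <= lsum (fun c => Cd ^ m * mb c (delta / 2)) l).
  { apply lsum_le. intros c Hc. apply dbl_le; try lra. rewrite d_sym. specialize (Hin c Hc). lra. }
  rewrite lsum_scal in H2.
  rewrite lsum_const in H2.
  assert (0 < mb x (D + delta / 2)) by (apply mb_pos; lra).
  assert (0 < Cd ^ m) by (apply pow_lt; lra).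
  assert (INR (length l) * mb x (D + delta / 2) <= Cd ^ m * mb x (D + delta / 2)) by nra.
  apply Rmult_le_reg_r with (mb x (D + delta / 2)); auto.
Qed.

Lemma nat_max (Q : nat -> Prop) N : (forall n, Q n -> (n <= N)%nat) -> Q 0%nat ->
  exists n, Q n /\ forall k, Q k -> (k <= n)%nat.
Proof.
  revert Q; induction N; intros Q HN H0.
  - exists 0%nat; split; auto.
  - destruct (classic (Q (S N))) as [HS|HS].
    + exists (S N); auto.
    + apply IHN; auto. intros n Hn. specialize (HN n Hn).
      destruct (Nat.eq_dec n (S N)); subst; [contradiction|lia].
Qed.

Lemma max_sep (A : X -> Prop) z rho delta : 0 < delta -> 0 <= rho -> (forall y, A y -> d z y <= rho) ->
  exists P, sep delta P /\ (forall c, In c P -> A c) /\ (forall y, A y -> exists c, In c P /\ d c y <= delta).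
Proof.
  intros Hdl Hr HA.
  destruct (pow_unbounded 2 ((rho + (rho + delta / 2)) / (delta / 2)) (Rle_refl _)) as [m Hm].
  assert (Hm' : rho + (rho + delta / 2) <= 2 ^ m * (delta / 2)).
  { apply Rmult_le_compat_r with (r := delta / 2) in Hm; [|lra].
    unfold Rdiv in Hm at 1. rewrite Rmult_assoc, Rinv_l, Rmult_1_r in Hm; lra. }
  destruct (nat_unbounded (Cd ^ m)) as [N HN].
  set (Q := fun n => exists P, sep delta P /\ (forall c, In c P -> A c) /\ length P = n).
  destruct (nat_max Q N) as [n [[P [HP1 [HP2 HP3]]] Hmax]].
  - intros n [P [HP1 [HP2 HP3]]]. subst n.
    pose proof (pack_count delta P z rho m Hdl Hr HP1 (fun c Hc => HA c (HP2 c Hc)) Hm').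
    assert (INR (length P) < INR N) by lra. apply INR_lt in H0; lia.
  - exists nil; simpl; repeat split; auto. intros c [].
  - exists P; repeat split; auto.
    intros y Hy. apply NNPP; intro Hn.
    assert (Q (S n)).
    { exists (y :: P). simpl; repeat split; auto.
      - intros q Hq. apply Rnot_le_lt. intro Hle. apply Hn. exists q; split; auto. rewrite d_sym; auto.
      - intros c [<-|Hc]; auto. }
    specialize (Hmax _ H). lia.
Qed.


Lemma Rpow_pos x y : 0 < Rpower x y. Proof. unfold Rpower; apply exp_pos. Qed.
Lemma Rpow_inv x y : 0 < x -> Rpower (/ x) y = Rpower x (- y).
Proof. intro; unfold Rpower; rewrite ln_Rinv; auto; f_equal; ring. Qed.
Lemma Rpow_mul x y z : 0 < x -> 0 < y -> Rpower (x * y) z = Rpower x z * Rpower y z.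
Proof. intros; rewrite Rpower_mult_distr; auto. Qed.
Lemma Rpow_opp1 x y : Rpower x y * Rpower x (- y) = 1.
Proof. rewrite <- Rpower_plus. replace (y + - y) with 0 by ring. unfold Rpower; rewrite Rmult_0_l; apply exp_0. Qed.
Lemma Rpow_neg_anti r r' q : 0 < r -> r <= r' -> 0 <= q -> Rpower r' (- q) <= Rpower r (- q).
Proof.
  intros. rewrite !Rpower_Ropp. apply Rinv_le_contravar. apply Rpow_pos.
  apply Rle_Rpower_l; auto; lra.
Qed.
Lemma Rpow_le1 x q : 0 < x <= 1 -> 0 <= q -> Rpower x q <= 1.
Proof. intros. assert (E1 : Rpower 1 q = 1) by (unfold Rpower; rewrite ln_1, Rmult_0_r; apply exp_0).
  rewrite <- E1. apply Rle_Rpower_l; lra. Qed.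
Lemma Rpow_ge1 x q : 1 <= x -> 0 <= q -> 1 <= Rpower x q.
Proof. intros. rewrite <- (Rpower_O x) by lra. apply Rle_Rpower; lra. Qed.

Definition cb (P : Prop) : bool := if excluded_middle_informative P then true else false.
Lemma cb_true P : cb P = true <-> P.
Proof. unfold cb; destruct (excluded_middle_informative P); split; intros; auto; discriminate. Qed.
Lemma cb_false P : cb P = false <-> ~ P.
Proof. unfold cb; destruct (excluded_middle_informative P); split; intros; auto; try discriminate; contradiction. Qed.

Lemma lsum_filter {T} (f : T -> bool) (g : T -> R) l :
  lsum g (filter f l) = lsum (fun x => if f x then g x else 0) l.
Proof. induction l; simpl; auto. destruct (f a); simpl; lra. Qed.

Lemma lsum_ind {T} (f : T -> bool) l : lsum (fun x => if f x then 1 else 0) l = INR (length (filter f l)).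
Proof. induction l; simpl; auto. rewrite IHl. destruct (f a); simpl length. rewrite S_INR; lra. lra. Qed.

Lemma sep_filter delta (f : X -> bool) l : sep delta l -> sep delta (filter f l).
Proof.
  induction l; simpl; auto. intros [H1 H2]. destruct (f a); simpl; auto.
  split; auto. intros q Hq. apply filter_In in Hq. apply H1; tauto.
Qed.


Lemma lsum_ext {T} (f g : T -> R) l : (forall x, In x l -> f x = g x) -> lsum f l = lsum g l.
Proof. induction l; simpl; intros; auto. rewrite H, IHl; auto. Qed.

Variable E : X -> Prop.
Variables s c q lam C : R.
Hypothesis Hs : 0 <= s.
Hypothesis Hc : 0 < c.
Hypothesis HAss : forall x r R0, E x -> 0 < r -> r < R0 -> lt_diam X d R0 E ->
  Rbar_le (Finite (c * Rpower (r / R0) s * real (mu (ball X d x R0))))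
          (mu (fun y => nbhd X d E r y /\ ball X d x R0 y)).
Hypothesis Hq : s < q.
Hypothesis Hlam8 : 8 <= lam.
Hypothesis Hlam : 2 * Cd ^ 4 / (c / Cd ^ 3) <= Rpower lam (q - s).
Hypothesis HC1 : 0 < C.
Hypothesis HC2 : C <= (c / Cd ^ 3) * Rpower lam (- s) / (2 * Cd ^ 3 * Rpower 2 q).
Hypothesis HC3 : C <= Rpower 2 (- q) / Cd.

Lemma ass_r x r R0 : E x -> 0 < r -> r < R0 -> lt_diam X d R0 E ->
  c * Rpower (r / R0) s * mb x R0 <= real (mu (fun y => nbhd X d E r y /\ ball X d x R0 y)).
Proof.
  intros. pose proof (HAss x r R0 H H0 H1 H2) as HA.
  destruct (fin_sub (fun y => nbhd X d E r y /\ ball X d x R0 y) x R0) as [Hf _].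
  - apply borel_I; [apply borel_nbhd|apply borel_ball].
  - intros y [_ Hy]; auto.
  - lra.
  - rewrite Hf in HA. exact HA.
Qed.

Lemma lt_diam_mono R1 R2 : R1 <= R2 -> lt_diam X d R2 E -> lt_diam X d R1 E.
Proof. intros H [x [y [H1 [H2 H3]]]]. exists x, y; repeat split; auto; lra. Qed.

Definition vq (p : X * R) := Rpower (snd p) (- q) * mb (fst p) (snd p).
Lemma vq_nn p : 0 < snd p -> 0 <= vq p.
Proof. intro. unfold vq. pose proof (Rpow_pos (snd p) (-q)). pose proof (mb_pos (fst p) (snd p) H). nra. Qed.

Definition covers (L : list (X * R)) w R := forall y, E y -> d w y <= R -> exists p, In p L /\ d (fst p) y <= snd p.
Definition radii (L : list (X * R)) lo hi := forall p, In p L -> lo <= snd p <= hi.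

Lemma step_lower w R P : E w -> 0 < R -> lt_diam X d R E ->
  (forall y, E y -> d w y <= R / 2 -> exists cc, In cc P /\ d cc y <= R / lam) ->
  (forall cc, In cc P -> d w cc <= R / 2) ->
  (c / Cd ^ 3) * Rpower lam (- s) * mb w R <= lsum (fun cc => mb cc (R / lam)) P.
Proof.
  intros Hw HR Hdi Hcov HP.
  set (rho := R / lam).
  assert (Hrho : 0 < rho) by (unfold rho; apply Rdiv_lt_0_compat; lra).
  assert (Hrho8 : rho <= R / 8).
  { unfold rho. apply Rmult_le_compat_l; [lra|]. apply Rinv_le_contravar; lra. }
  set (N := fun y => nbhd X d E rho y /\ ball X d w (R / 4) y).
  assert (H1 : c * Rpower (rho / (R / 4)) s * mb w (R / 4) <= real (mu N)).
  { apply ass_r; auto; try lra. apply lt_diam_mono with R; auto; lra. }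
  set (U := Un (fun cc => ball X d cc (2 * rho)) P).
  assert (HU : subset U (ball X d w R)).
  { intros y [cc [Hc' Hy]]. unfold ball in *. specialize (HP cc Hc'). pose proof (d_tri w cc y). lra. }
  assert (H2 : real (mu N) <= real (mu U)).
  { apply m_mono with w R; auto.
    - apply borel_I; [apply borel_nbhd|apply borel_ball].
    - apply borel_Un; intros; apply borel_ball.
    - intros y [[e [He Hye]] Hy]. unfold ball in Hy.
      assert (d w e <= R / 2) by (pose proof (d_tri w y e); lra).
      destruct (Hcov e He H) as [cc [Hcc Hce]]. exists cc; split; auto. unfold ball.
      pose proof (d_tri cc e y). rewrite (d_sym e y) in H0. fold rho in Hce. lra. }
  assert (H3 : real (mu U) <= lsum (fun cc => mb cc (2 * rho)) P).
  { apply (m_sub_list (fun cc => ball X d cc (2 * rho)) P w R); auto.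
    - intros; apply borel_ball.
    - intros t Ht y Hy. apply HU. exists t; auto. }
  assert (H4 : lsum (fun cc => mb cc (2 * rho)) P <= Cd * lsum (fun cc => mb cc rho) P).
  { rewrite <- lsum_scal. apply lsum_le. intros; apply HCd; auto. }
  assert (H5 : mb w R <= Cd ^ 2 * mb w (R / 4)).
  { apply dbl_le; try lra. rewrite d_refl. simpl. lra. }
  assert (H6 : Rpower lam (- s) <= Rpower (rho / (R / 4)) s).
  { rewrite <- Rpow_inv by lra. apply Rle_Rpower_l; auto. split.
    apply Rinv_0_lt_compat; lra.
    replace (rho / (R / 4)) with (4 / lam) by (unfold rho; field; lra).
    unfold Rdiv. assert (0 < / lam) by (apply Rinv_0_lt_compat; lra). lra. }
  assert (HA0 : 0 < Rpower (rho / (R / 4)) s) by apply Rpow_pos.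
  assert (Hm4 : 0 < mb w (R / 4)) by (apply mb_pos; lra).
  assert (HmR : 0 < mb w R) by (apply mb_pos; lra).
  assert (HL : 0 < Rpower lam (- s)) by apply Rpow_pos.
  assert (HCd3 : 0 < Cd ^ 3) by (apply pow_lt; lra).
  assert (Hchain : c * Rpower (rho / (R / 4)) s * mb w (R / 4) <= Cd * lsum (fun cc => mb cc rho) P) by lra.
  assert (Hx : c / Cd ^ 3 * Rpower lam (- s) * mb w R <= c / Cd ^ 3 * Rpower (rho / (R / 4)) s * (Cd ^ 2 * mb w (R / 4))).
  { apply Rmult_le_compat; try lra.
    - apply Rmult_le_pos; [apply Rlt_le, Rdiv_lt_0_compat|]; lra.
    - apply Rmult_le_compat_l; auto. apply Rlt_le, Rdiv_lt_0_compat; lra. }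
  replace (c / Cd ^ 3 * Rpower (rho / (R / 4)) s * (Cd ^ 2 * mb w (R / 4)))
    with ((c * Rpower (rho / (R / 4)) s * mb w (R / 4)) / Cd) in Hx by (field; lra).
  apply Rle_trans with (1 := Hx).
  apply Rmult_le_reg_l with Cd; [lra|]. unfold Rdiv. rewrite <- Rmult_assoc, (Rmult_comm Cd), Rmult_assoc, Rinv_r, Rmult_1_r; lra.
Qed.


Definition smallb rho cc (p : X * R) := cb (snd p <= 2 * rho /\ d cc (fst p) <= 3 * rho).
Definition bigb rho cc (p : X * R) := cb (2 * rho < snd p /\ d cc (fst p) <= 2 * snd p).

Lemma child_bound t w R L cc : 0 < R -> radii L (R / lam ^ S t) (2 * R) -> covers L w R ->
  E cc -> d w cc <= R / 2 ->
  (forall w' L', E w' -> radii L' ((R / lam) / lam ^ t) (2 * (R / lam)) -> covers L' w' (R / lam) ->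
     C * Rpower (R / lam) (- q) * mb w' (R / lam) <= lsum vq L') ->
  mb cc (R / lam) <= Rpower (R / lam) q / C * lsum vq (filter (smallb (R / lam) cc) L)
                      + lsum (fun p => if bigb (R / lam) cc p then mb cc (R / lam) else 0) L.
Proof.
  intros HR Hrad Hcov Hcc Hwc IH.
  set (rho := R / lam) in *.
  assert (Hrho : 0 < rho) by (unfold rho; apply Rdiv_lt_0_compat; lra).
  assert (Hrho8 : rho <= R / 8).
  { unfold rho. apply Rmult_le_compat_l; [lra|]. apply Rinv_le_contravar; lra. }
  assert (Hlt : 0 < lam ^ S t) by (apply pow_lt; lra).
  assert (Hpos : forall p, In p L -> 0 < snd p).
  { intros p Hp. destruct (Hrad p Hp). assert (0 < R / lam ^ S t) by (apply Rdiv_lt_0_compat; lra). lra. }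
  assert (Hn1 : 0 <= lsum vq (filter (smallb rho cc) L)).
  { apply lsum_nn. intros p Hp. apply filter_In in Hp. apply vq_nn, Hpos; tauto. }
  assert (Hn2 : 0 <= lsum (fun p => if bigb rho cc p then mb cc rho else 0) L).
  { apply lsum_nn. intros p Hp. destruct (bigb rho cc p); [apply Rlt_le, mb_pos|]; lra. }
  assert (HRq : 0 < Rpower rho q) by apply Rpow_pos.
  destruct (classic (covers (filter (smallb rho cc) L) cc rho)) as [Hc'|Hc'].
  - assert (Hih : C * Rpower rho (- q) * mb cc rho <= lsum vq (filter (smallb rho cc) L)).
    { apply IH; auto. intros p Hp. apply filter_In in Hp. destruct Hp as [Hp Hs'].
      unfold smallb in Hs'. apply (proj1 (cb_true _)) in Hs'. destruct (Hrad p Hp). destruct Hs' as [Hs1 Hs2]. split; [|unfold rho in *; lra].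
      replace (rho / lam ^ t) with (R / lam ^ S t); auto. unfold rho. simpl. field.
      repeat split; try apply pow_nonzero; lra. }
    assert (mb cc rho <= Rpower rho q / C * lsum vq (filter (smallb rho cc) L)); [|lra].
    apply Rmult_le_compat_l with (r := Rpower rho q / C) in Hih; [|apply Rlt_le, Rdiv_lt_0_compat; lra].
    replace (Rpower rho q / C * (C * Rpower rho (- q) * mb cc rho)) with ((Rpower rho q * Rpower rho (- q)) * mb cc rho) in Hih
      by (field; lra).
    rewrite Rpow_opp1, Rmult_1_l in Hih. exact Hih.
  - unfold covers in Hc'.
    apply not_all_ex_not in Hc'. destruct Hc' as [y Hy].
    apply imply_to_and in Hy. destruct Hy as [Hey Hy]. apply imply_to_and in Hy. destruct Hy as [Hcy Hy].
    assert (Hwy : d w y <= R) by (pose proof (d_tri w cc y); lra).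
    destruct (Hcov y Hey Hwy) as [p [Hp Hpy]].
    destruct (Rle_lt_dec (snd p) (2 * rho)) as [Hsm|Hbg].
    + exfalso. apply Hy. exists p; split; auto. apply filter_In; split; auto. apply (proj2 (cb_true _)). split; auto.
      pose proof (d_tri cc y (fst p)). rewrite (d_sym y (fst p)) in H. lra.
    + assert (Hb' : bigb rho cc p = true).
      { apply (proj2 (cb_true _)). split; auto. pose proof (d_tri cc y (fst p)). rewrite (d_sym y (fst p)) in H. lra. }
      assert (mb cc rho <= lsum (fun p => if bigb rho cc p then mb cc rho else 0) L); [|
        assert (0 <= Rpower rho q / C * lsum vq (filter (smallb rho cc) L)) by
          (apply Rmult_le_pos; auto; apply Rlt_le, Rdiv_lt_0_compat; lra); lra].
      replace (mb cc rho) with ((fun p => if bigb rho cc p then mb cc rho else 0) p) at 1 by (simpl; rewrite Hb'; auto).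
      apply (lsum_In (fun p => if bigb rho cc p then mb cc rho else 0) L p); auto. intros p' _. destruct (bigb rho cc p'); [apply Rlt_le, mb_pos|]; lra.
Qed.


Lemma sum_small rho P L : 0 < rho -> sep rho P -> (forall p, In p L -> 0 < snd p) ->
  lsum (fun cc => lsum vq (filter (smallb rho cc) L)) P <= Cd ^ 4 * lsum vq L.
Proof.
  intros Hr HP HL.
  rewrite (lsum_ext _ (fun cc => lsum (fun p => if smallb rho cc p then vq p else 0) L))
    by (intros; apply lsum_filter).
  rewrite lsum_swap. rewrite <- lsum_scal. apply lsum_le. intros p Hp.
  rewrite (lsum_ext _ (fun cc => vq p * (if smallb rho cc p then 1 else 0)))
    by (intros cc _; destruct (smallb rho cc p); ring).
  rewrite lsum_scal. rewrite (lsum_ind (fun cc => smallb rho cc p)).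
  rewrite (Rmult_comm (Cd ^ 4)). apply Rmult_le_compat_l. apply vq_nn; auto.
  apply (pack_count rho _ (fst p) (3 * rho) 4); try lra.
  - apply sep_filter; auto.
  - intros cc Hcc. apply filter_In in Hcc. destruct Hcc as [_ Hcc].
    unfold smallb in Hcc. apply (proj1 (cb_true _)) in Hcc. rewrite d_sym; tauto.
Qed.

Lemma sum_big rho P L R : 0 < rho -> sep rho P -> radii L 0 (2 * R) -> (forall p, In p L -> 0 < snd p) ->
  lsum (fun cc => lsum (fun p => if bigb rho cc p then mb cc rho else 0) L) P
    <= Cd ^ 3 * Rpower (2 * R) q * lsum vq L.
Proof.
  intros Hr HP Hrad HL.
  rewrite lsum_swap. rewrite <- lsum_scal. apply lsum_le. intros p Hp.
  assert (Hvq : mb (fst p) (snd p) <= Rpower (2 * R) q * vq p).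
  { unfold vq. rewrite <- Rmult_assoc.
    assert (Rpower (2 * R) (- q) <= Rpower (snd p) (- q)).
    { apply Rpow_neg_anti; auto. apply Hrad; auto. lra. }
    assert (1 <= Rpower (2 * R) q * Rpower (snd p) (- q)).
    { rewrite <- (Rpow_opp1 (2 * R) q). apply Rmult_le_compat_l; auto. apply Rlt_le, Rpow_pos. }
    assert (0 < mb (fst p) (snd p)) by (apply mb_pos; auto). nra. }
  assert (Hq0 : 0 <= Cd ^ 3 * (Rpower (2 * R) q * vq p)).
  { apply Rmult_le_pos. apply pow_le; lra. apply Rmult_le_pos. apply Rlt_le, Rpow_pos. apply vq_nn; auto. }
  destruct (Rlt_dec (2 * rho) (snd p)) as [Hbig|Hsm].
  - rewrite <- (lsum_filter (fun cc => bigb rho cc p) (fun cc => mb cc rho)).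
    set (P' := filter (fun cc => bigb rho cc p) P).
    assert (Hs' : sep rho P') by (apply sep_filter; auto).
    assert (Hin : forall cc, In cc P' -> d (fst p) cc <= 2 * snd p).
    { intros cc Hcc. apply filter_In in Hcc. destruct Hcc as [_ Hcc].
      unfold bigb in Hcc. apply (proj1 (cb_true _)) in Hcc. rewrite d_sym; tauto. }
    assert (H1 : lsum (fun cc => mb cc rho) P' <= Cd * lsum (fun cc => mb cc (rho / 2)) P').
    { rewrite <- lsum_scal. apply lsum_le. intros cc _.
      replace rho with (2 * (rho / 2)) at 1 by field. apply HCd. lra. }
    assert (H2 : lsum (fun cc => mb cc (rho / 2)) P' <= mb (fst p) (2 * snd p + rho / 2)).
    { apply pack_sum; auto. assert (0 < snd p) by auto. lra. }
    assert (H3 : mb (fst p) (2 * snd p + rho / 2) <= Cd ^ 2 * mb (fst p) (snd p)).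
    { apply dbl_le; try lra. rewrite d_refl. simpl. lra. }
    replace (Cd ^ 3 * Rpower (2 * R) q * vq p) with (Cd * Cd ^ 2 * (Rpower (2 * R) q * vq p)) by ring.
    assert (0 <= Cd * Cd ^ 2) by (apply Rmult_le_pos; [|apply pow_le]; lra).
    assert (Cd * mb (fst p) (2 * snd p + rho / 2) <= Cd * (Cd ^ 2 * mb (fst p) (snd p))) by
      (apply Rmult_le_compat_l; lra).
    assert (Cd * Cd ^ 2 * mb (fst p) (snd p) <= Cd * Cd ^ 2 * (Rpower (2 * R) q * vq p)) by
      (apply Rmult_le_compat_l; lra).
    assert (Cd * lsum (fun cc => mb cc (rho / 2)) P' <= Cd * mb (fst p) (2 * snd p + rho / 2)) by
      (apply Rmult_le_compat_l; lra).
    lra.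
  - rewrite (lsum_ext _ (fun _ => 0)).
    + rewrite lsum_const. rewrite Rmult_0_r. rewrite <- Rmult_assoc in Hq0. lra.
    + intros cc _. destruct (bigb rho cc p) eqn:Eb; auto.
      unfold bigb in Eb. apply (proj1 (cb_true _)) in Eb. lra.
Qed.


Lemma final_alg R V mbw : 0 < R -> 0 <= V -> 0 < mbw ->
  (c / Cd ^ 3) * Rpower lam (- s) * mbw <= (Rpower (R / lam) q / C * Cd ^ 4 + Cd ^ 3 * Rpower (2 * R) q) * V ->
  C * Rpower R (- q) * mbw <= V.
Proof.
  intros HR HV Hm H.
  set (a := c / Cd ^ 3) in *. set (Ls := Rpower lam (- s)) in *. set (M := Cd ^ 4) in *.
  assert (HCd3 : 0 < Cd ^ 3) by (apply pow_lt; lra).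
  assert (Ha : 0 < a) by (unfold a; apply Rdiv_lt_0_compat; lra).
  assert (HLs : 0 < Ls) by apply Rpow_pos.
  assert (E1 : Rpower (R / lam) q = Rpower R q * Rpower lam (- q)).
  { unfold Rdiv. rewrite Rpow_mul, Rpow_inv; auto; try lra. apply Rinv_0_lt_compat; lra. }
  assert (E2 : Rpower (2 * R) q = Rpower 2 q * Rpower R q) by (apply Rpow_mul; lra).
  assert (E3 : Rpower R (- q) * Rpower R q = 1) by (rewrite Rmult_comm; apply Rpow_opp1).
  assert (E4 : Ls = Rpower lam (q - s) * Rpower lam (- q)).
  { unfold Ls. rewrite <- Rpower_plus. f_equal. ring. }
  assert (HM : M * Rpower lam (- q) <= a * Ls / 2).
  { rewrite E4. assert (0 < Rpower lam (- q)) by apply Rpow_pos.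
    assert (2 * M / a * a = 2 * M) by (field; lra).
    assert (2 * M <= a * Rpower lam (q - s)).
    { rewrite <- H1. rewrite Rmult_comm. apply Rmult_le_compat_l; lra. }
    nra. }
  assert (HC : C * Cd ^ 3 * Rpower 2 q <= a * Ls / 2).
  { assert (0 < 2 * Cd ^ 3 * Rpower 2 q) by (pose proof (Rpow_pos 2 q); nra).
    apply Rmult_le_compat_r with (r := 2 * Cd ^ 3 * Rpower 2 q) in HC2; [|lra].
    replace (a * Ls / (2 * Cd ^ 3 * Rpower 2 q) * (2 * Cd ^ 3 * Rpower 2 q)) with (a * Ls) in HC2 by (field; pose proof (Rpow_pos 2 q); repeat split; lra).
    lra. }
  assert (HQ : C * Rpower R (- q) * (Rpower (R / lam) q / C * M + Cd ^ 3 * Rpower (2 * R) q) <= a * Ls).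
  { rewrite E1, E2.
    replace (C * Rpower R (- q) * (Rpower R q * Rpower lam (- q) / C * M + Cd ^ 3 * (Rpower 2 q * Rpower R q)))
      with ((Rpower R (- q) * Rpower R q) * (M * Rpower lam (- q) + C * Cd ^ 3 * Rpower 2 q)) by (field; lra).
    rewrite E3. lra. }
  fold M in H.
  assert (HRm : 0 < Rpower R (- q)) by apply Rpow_pos.
  assert (H2 : C * Rpower R (- q) * (a * Ls * mbw) <= C * Rpower R (- q) * ((Rpower (R / lam) q / C * M + Cd ^ 3 * Rpower (2 * R) q) * V)).
  { apply Rmult_le_compat_l; auto. apply Rmult_le_pos; lra. }
  rewrite <- Rmult_assoc in H2.
  assert (H3 : C * Rpower R (- q) * (Rpower (R / lam) q / C * M + Cd ^ 3 * Rpower (2 * R) q) * V <= a * Ls * V)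
    by (apply Rmult_le_compat_r; auto).
  apply Rmult_le_reg_l with (a * Ls). nra.
  replace (a * Ls * (C * Rpower R (- q) * mbw)) with (C * Rpower R (- q) * (a * Ls * mbw)) by ring. lra.
Qed.

Lemma main t : forall w R L, E w -> 0 < R -> lt_diam X d R E -> radii L (R / lam ^ t) (2 * R) -> covers L w R ->
  C * Rpower R (- q) * mb w R <= lsum vq L.
Proof.
  induction t; intros w R L Hw HR Hdi Hrad Hcov.
  - simpl in Hrad. rewrite Rdiv_1_r in Hrad.
    destruct (Hcov w Hw) as [p [Hp Hpw]]. rewrite d_refl; lra.
    destruct (Hrad p Hp) as [Hr1 Hr2].
    assert (H1 : mb w R <= Cd * mb (fst p) (snd p)).
    { replace Cd with (Cd ^ 1) at 1 by ring. apply dbl_le; simpl; lra. }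
    assert (H2 : Rpower (2 * R) (- q) <= Rpower (snd p) (- q)) by (apply Rpow_neg_anti; lra).
    rewrite Rpow_mul in H2 by lra.
    assert (H3 : vq p <= lsum vq L).
    { apply lsum_In; auto. intros p' Hp'. apply vq_nn. destruct (Hrad p' Hp'); lra. }
    change (vq p) with (Rpower (snd p) (- q) * mb (fst p) (snd p)) in H3.
    assert (HRm : 0 < Rpower R (- q)) by apply Rpow_pos.
    assert (Hmw : 0 < mb w R) by (apply mb_pos; auto).
    assert (Hmx : 0 < mb (fst p) (snd p)) by (apply mb_pos; lra).
    assert (H4 : C * Rpower R (- q) * mb w R <= Rpower 2 (- q) / Cd * Rpower R (- q) * (Cd * mb (fst p) (snd p))).
    { apply Rmult_le_compat; try nra. }
    replace (Rpower 2 (- q) / Cd * Rpower R (- q) * (Cd * mb (fst p) (snd p)))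
      with (Rpower 2 (- q) * Rpower R (- q) * mb (fst p) (snd p)) in H4 by (field; lra).
    assert (Rpower 2 (- q) * Rpower R (- q) * mb (fst p) (snd p) <= Rpower (snd p) (- q) * mb (fst p) (snd p))
      by (apply Rmult_le_compat_r; lra).
    lra.
  - set (rho := R / lam).
    assert (Hrho : 0 < rho) by (unfold rho; apply Rdiv_lt_0_compat; lra).
    assert (Hrho8 : rho <= R / 8).
    { unfold rho. apply Rmult_le_compat_l; [lra|]. apply Rinv_le_contravar; lra. }
    assert (Hlt : 0 < lam ^ S t) by (apply pow_lt; lra).
    assert (Hpos : forall p, In p L -> 0 < snd p).
    { intros p Hp. destruct (Hrad p Hp). assert (0 < R / lam ^ S t) by (apply Rdiv_lt_0_compat; lra). lra. }
    destruct (max_sep (fun y => E y /\ d w y <= R / 2) w (R / 2) rho) as [P [HP1 [HP2 HP3]]]; try lra.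
    { intros y [_ Hy]; auto. }
    assert (Hlow := step_lower w R P Hw HR Hdi (fun y Hy Hwy => HP3 y (conj Hy Hwy)) (fun cc Hcc => proj2 (HP2 cc Hcc))).
    fold rho in Hlow.
    assert (Hch : forall cc, In cc P -> mb cc rho <= Rpower rho q / C * lsum vq (filter (smallb rho cc) L)
                      + lsum (fun p => if bigb rho cc p then mb cc rho else 0) L).
    { intros cc Hcc. destruct (HP2 cc Hcc) as [Hec Hwc]. apply (child_bound t w R L cc); auto.
      intros w' L' Hw' Hr' Hc'. apply IHt; auto; try (unfold rho in *; lra). apply lt_diam_mono with R; auto. unfold rho in *; lra. }
    apply lsum_le in Hch. rewrite lsum_plus, lsum_scal in Hch.
    pose proof (sum_small rho P L Hrho HP1 Hpos) as Hsm.
    assert (Hbg : lsum (fun cc => lsum (fun p => if bigb rho cc p then mb cc rho else 0) L) P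
       <= Cd ^ 3 * Rpower (2 * R) q * lsum vq L).
    { apply sum_big; auto. intros p Hp. split; [apply Rlt_le|]; auto. apply Hrad; auto. }
    apply final_alg; auto.
    + apply lsum_nn. intros; apply vq_nn; auto.
    + apply mb_pos; auto.
    + fold rho. assert (0 <= Rpower rho q / C) by (apply Rlt_le, Rdiv_lt_0_compat; [apply Rpow_pos|lra]).
      assert (Rpower rho q / C * lsum (fun cc => lsum vq (filter (smallb rho cc) L)) P <= Rpower rho q / C * (Cd ^ 4 * lsum vq L))
        by (apply Rmult_le_compat_l; auto).
      replace ((Rpower rho q / C * Cd ^ 4 + Cd ^ 3 * Rpower (2 * R) q) * lsum vq L)
        with (Rpower rho q / C * (Cd ^ 4 * lsum vq L) + Cd ^ 3 * Rpower (2 * R) q * lsum vq L) by ring.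
      lra.
Qed.


Hypothesis HcX : complete X d.
Hypothesis HEc : closed X d E.

Lemma list_max_N (P : list X) (Q : X -> nat -> Prop) :
  (forall p N N', (N <= N')%nat -> Q p N -> Q p N') -> (forall p, In p P -> exists N, Q p N) ->
  exists N, forall p, In p P -> Q p N.
Proof.
  intros Hmono. induction P as [|a P IH]; intros H.
  - exists 0%nat; intros p [].
  - destruct (H a (or_introl eq_refl)) as [Na Ha]. destruct IH as [Np Hp].
    { intros; apply H; simpl; auto. }
    exists (Nat.max Na Np). intros p [<-|Hin].
    + apply Hmono with Na; auto; lia.
    + apply Hmono with Np; auto; lia.
Qed.

Section Compact.
Variable w : X.
Variable R : R.
Variable b : nat -> option (X * RbaseSymbolsImpl.R).
Hypothesis HR : 0 < R.
Hypothesis Hw : E w.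
Hypothesis Hbpos : forall k x r, b k = Some (x, r) -> 0 < r.
Hypothesis Hbcov : forall y, E y -> d w y <= R -> exists k x r, b k = Some (x, r) /\ d x y <= r.

Definition good z rho := exists N, forall y, E y -> d w y <= R -> d z y <= rho ->
  exists k x r, (k <= N)%nat /\ b k = Some (x, r) /\ d x y < 2 * r.

Lemma good_step z rho : 0 < rho -> ~ good z rho ->
  exists z', E z' /\ d w z' <= R /\ d z z' <= rho /\ ~ good z' (rho / 4).
Proof.
  intros Hr Hng.
  destruct (max_sep (fun y => E y /\ d w y <= R /\ d z y <= rho) z rho (rho / 4)) as [P [_ [HP2 HP3]]]; try lra.
  { intros y [_ [_ H]]; auto. }
  apply NNPP; intro Hn. apply Hng.
  assert (Hall : forall p, In p P -> good p (rho / 4)).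
  { intros p Hp. apply NNPP; intro Hg. apply Hn. exists p. destruct (HP2 p Hp) as [H1 [H2 H3]]. auto. }
  destruct (list_max_N P (fun p N => forall y, E y -> d w y <= R -> d p y <= rho / 4 ->
       exists k x r, (k <= N)%nat /\ b k = Some (x, r) /\ d x y < 2 * r)) as [N HN].
  - intros p N N' HNN HQ y H1 H2 H3. destruct (HQ y H1 H2 H3) as [k [x [r [Hk Hb']]]].
    exists k, x, r; split; [lia|auto].
  - intros p Hp. apply Hall; auto.
  - exists N. intros y H1 H2 H3. destruct (HP3 y (conj H1 (conj H2 H3))) as [p [Hp Hpy]].
    apply (HN p Hp); auto.
Qed.

Lemma u_dec (n m : nat) : (n <= m)%nat -> R / 4 ^ m <= R / 4 ^ n.
Proof.
  intro H. unfold Rdiv. apply Rmult_le_compat_l; [lra|]. apply Rinv_le_contravar.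
  apply pow_lt; lra. apply Rle_pow; auto; lra.
Qed.

Lemma u_small eps : 0 < eps -> exists N, R / 4 ^ N < eps.
Proof.
  intro He. destruct (pow_unbounded 4 (R / eps + 1)) as [N HN]; [lra|]. exists N.
  assert (0 < 4 ^ N) by (apply pow_lt; lra).
  apply Rmult_lt_reg_r with (4 ^ N); auto. unfold Rdiv. rewrite Rmult_assoc, Rinv_l by lra.
  assert (R / eps * eps = R) by (field; lra). nra.
Qed.

Lemma compact_cover : exists N, forall y, E y -> d w y <= R ->
  exists k x r, (k <= N)%nat /\ b k = Some (x, r) /\ d x y < 2 * r.
Proof.
  apply NNPP; intro Hng0.
  assert (Hng : ~ good w R).
  { intros [N HN]. apply Hng0. exists N. intros y H1 H2. apply HN; auto. }
  assert (Hst : forall zr : X * RbaseSymbolsImpl.R, exists z', (0 < snd zr /\ ~ good (fst zr) (snd zr)) ->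
     E z' /\ d w z' <= R /\ d (fst zr) z' <= snd zr /\ ~ good z' (snd zr / 4)).
  { intros [z rho]. simpl. destruct (classic (0 < rho /\ ~ good z rho)) as [[H1 H2]|H].
    - destruct (good_step z rho H1 H2) as [z' Hz']. exists z'; auto.
    - exists z; intro; contradiction. }
  set (g := fun zr => proj1_sig (constructive_indefinite_description _ (Hst zr))).
  assert (Hg : forall zr, 0 < snd zr -> ~ good (fst zr) (snd zr) ->
     E (g zr) /\ d w (g zr) <= R /\ d (fst zr) (g zr) <= snd zr /\ ~ good (g zr) (snd zr / 4)).
  { intros zr H1 H2. unfold g. destruct (constructive_indefinite_description _ (Hst zr)) as [z' Hz']. simpl; auto. }
  set (zs := fix zs (n : nat) : X * RbaseSymbolsImpl.R := match n with 0%nat => (w, R) | S n => (g (zs n), snd (zs n) / 4) end).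
  assert (Hinv : forall n, snd (zs n) = R / 4 ^ n /\ E (fst (zs n)) /\ d w (fst (zs n)) <= R /\ ~ good (fst (zs n)) (snd (zs n))).
  { induction n.
    - simpl. repeat split; auto. field. rewrite d_refl; lra.
    - destruct IHn as [H1 [H2 [H3 H4]]].
      assert (0 < snd (zs n)) by (rewrite H1; apply Rdiv_lt_0_compat; [|apply pow_lt]; lra).
      destruct (Hg (zs n) H H4) as [G1 [G2 [G3 G4]]].
      simpl. repeat split; auto. rewrite H1. field. apply pow_nonzero; lra. }
  assert (Hstep : forall n, d (fst (zs n)) (fst (zs (S n))) <= R / 4 ^ n).
  { intro n. destruct (Hinv n) as [H1 [H2 [H3 H4]]].
    assert (0 < snd (zs n)) by (rewrite H1; apply Rdiv_lt_0_compat; [|apply pow_lt]; lra).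
    destruct (Hg (zs n) H H4) as [G1 [G2 [G3 G4]]]. simpl. rewrite <- H1; auto. }
  set (f := fun n => fst (zs n)).
  assert (Hcau : forall n k, d (f n) (f (n + k)%nat) <= 4 / 3 * (R / 4 ^ n) - 4 / 3 * (R / 4 ^ (n + k))).
  { intros n k. induction k.
    - rewrite Nat.add_0_r. unfold f; rewrite d_refl. lra.
    - replace (n + S k)%nat with (S (n + k)) by lia.
      pose proof (d_tri (f n) (f (n + k)%nat) (f (S (n + k)))). pose proof (Hstep (n + k)%nat).
      unfold f in *. simpl pow. assert (0 < 4 ^ (n + k)) by (apply pow_lt; lra).
      replace (4 / 3 * (R / (4 * 4 ^ (n + k)))) with (4 / 3 * (R / 4 ^ (n + k)) - R / 4 ^ (n + k)) by (field; lra).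
      lra. }
  assert (Hcau2 : forall n m, (n <= m)%nat -> d (f n) (f m) <= 4 / 3 * (R / 4 ^ n)).
  { intros n m Hnm. replace m with (n + (m - n))%nat by lia. pose proof (Hcau n (m - n)%nat).
    assert (0 <= R / 4 ^ (n + (m - n))) by (apply Rlt_le, Rdiv_lt_0_compat; [|apply pow_lt]; lra). lra. }
  destruct (HcX f) as [l Hl].
  { intros eps He. destruct (u_small (3 / 4 * eps)) as [N HN]; [lra|]. exists N. intros m n Hm Hn.
    destruct (Nat.le_ge_cases m n) as [Hmn|Hmn].
    - pose proof (Hcau2 m n Hmn). pose proof (u_dec N m Hm). lra.
    - rewrite d_sym. pose proof (Hcau2 n m Hmn). pose proof (u_dec N n Hn). lra. }
  assert (HEl : E l).
  { apply NNPP; intro Hnl. destruct (HEc l Hnl) as [r [Hr Hr']].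
    destruct (Hl r Hr) as [N HN]. apply (Hr' (f N)). rewrite d_sym; apply HN; lia.
    destruct (Hinv N) as [_ [H _]]; auto. }
  assert (Hwl : d w l <= R).
  { apply Rnot_lt_le; intro Hlt. destruct (Hl (d w l - R)) as [N HN]; [lra|].
    specialize (HN N (le_n N)). destruct (Hinv N) as [_ [_ [H _]]].
    pose proof (d_tri w (f N) l). unfold f in *. lra. }
  destruct (Hbcov l HEl Hwl) as [k [x [r [Hbk Hxl]]]].
  assert (Hr : 0 < r) by (eapply Hbpos; eauto).
  destruct (Hl (r / 2)) as [N1 HN1]; [lra|].
  destruct (u_small (r / 2)) as [N2 HN2]; [lra|].
  set (n := Nat.max N1 N2).
  destruct (Hinv n) as [Hs1 [_ [_ Hgn]]]. apply Hgn.
  exists k. intros y H1 H2 H3. exists k, x, r. repeat split; auto.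
  pose proof (HN1 n (Nat.le_max_l _ _)). pose proof (u_dec N2 n (Nat.le_max_r _ _)).
  rewrite Hs1 in H3. pose proof (d_tri x l y). pose proof (d_tri l (f n) y).
  rewrite (d_sym l (f n)) in H5. unfold f in *. lra.
Qed.

End Compact.


Definition opt0 (o : option (X * R)) : list (X * R) :=
  match o with Some (x, r) => (x, 2 * r) :: nil | None => nil end.
Fixpoint Lb (b : nat -> option (X * R)) (N : nat) : list (X * R) :=
  match N with 0%nat => opt0 (b 0%nat) | S N' => opt0 (b N) ++ Lb b N' end.

Lemma In_Lb b N k x r : (k <= N)%nat -> b k = Some (x, r) -> In (x, 2 * r) (Lb b N).
Proof.
  induction N; intros Hk Hb'.
  - assert (k = 0%nat) by lia. subst. simpl. rewrite Hb'. simpl; auto.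
  - simpl. apply in_or_app. destruct (Nat.eq_dec k (S N)) as [->|Hne].
    + left. rewrite Hb'. simpl; auto.
    + right. apply IHN; auto; lia.
Qed.

Lemma Lb_In b N p : In p (Lb b N) -> exists k x r, b k = Some (x, r) /\ p = (x, 2 * r).
Proof.
  induction N; simpl; intro H.
  - destruct (b 0%nat) as [[x r]|] eqn:Eb; simpl in H; [|contradiction].
    destruct H as [<-|[]]. exists 0%nat, x, r; auto.
  - apply in_app_or in H. destruct H as [H|H]; auto.
    destruct (b (S N)) as [[x r]|] eqn:Eb; simpl in H; [|contradiction].
    destruct H as [<-|[]]. exists (S N), x, r; auto.
Qed.

Lemma lsum_app {T} (f : T -> R) l1 l2 : lsum f (l1 ++ l2) = lsum f l1 + lsum f l2.
Proof. induction l1; simpl; lra. Qed.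

Lemma ct_nn (b : nat -> option (X * R)) k : (forall k x r, b k = Some (x, r) -> 0 < r) -> 0 <= real (cover_term X d mu q (b k)).
Proof.
  intro Hp. destruct (b k) as [[x r]|] eqn:Eb; simpl; [|lra].
  pose proof (Hp k x r Eb). pose proof (Rpow_pos r (- q)). pose proof (mb_pos x r H).
  unfold mb in H1. nra.
Qed.

Lemma V_Lb (b : nat -> option (X * R)) N : (forall k x r, b k = Some (x, r) -> 0 < r) ->
  lsum vq (Lb b N) <= Cd * sum_f_R0 (fun k => real (cover_term X d mu q (b k))) N.
Proof.
  intro Hp.
  assert (Hopt : forall k, lsum vq (opt0 (b k)) <= Cd * real (cover_term X d mu q (b k))).
  { intro k. destruct (b k) as [[x r]|] eqn:Eb; simpl; [|lra].
    pose proof (Hp k x r Eb) as Hr. unfold vq; simpl.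
    assert (H1 : Rpower (2 * r) (- q) <= Rpower r (- q)) by (apply Rpow_neg_anti; lra).
    assert (H2 : mb x (2 * r) <= Cd * mb x r) by (apply HCd; auto).
    pose proof (Rpow_pos (2 * r) (- q)). pose proof (mb_pos x r Hr). pose proof (mb_pos x (2 * r)).
    change (real (mu (ball X d x r))) with (mb x r). nra. }
  induction N; simpl.
  - apply Hopt.
  - rewrite lsum_app. pose proof (Hopt (S N)). lra.
Qed.

Lemma partial_le (b : nat -> option (X * R)) S N : (forall k x r, b k = Some (x, r) -> 0 < r) ->
  Rbar_series (fun k => cover_term X d mu q (b k)) S ->
  Rbar_le (Finite (sum_f_R0 (fun k => real (cover_term X d mu q (b k))) N)) S.
Proof.
  intros Hp [[l [Hl [_ Hcv]]] | [Hv _]].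
  - subst S. simpl. apply growing_ineq; auto. intro n. simpl.
    pose proof (ct_nn b (S n) Hp). lra.
  - subst; simpl; auto.
Qed.

Lemma list_min_pos (L : list (X * R)) : (forall p, In p L -> 0 < snd p) -> exists m, 0 < m /\ forall p, In p L -> m <= snd p.
Proof.
  induction L as [|a L IH]; intro H.
  - exists 1; split; [lra|intros p []].
  - destruct IH as [m [Hm Hm']]. intros; apply H; simpl; auto.
    exists (Rmin m (snd a)). split. apply Rmin_glb_lt; auto. apply H; simpl; auto.
    intros p [<-|Hp]. apply Rmin_r. eapply Rle_trans. apply Rmin_l. auto.
Qed.

Lemma content_ok w R : E w -> 0 < R -> lt_diam X d R E ->
  hcontent_ge X d mu q R (fun y => E y /\ ball X d w R y) (C / Cd * Rpower R (- q) * mb w R).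
Proof.
  intros Hw HR Hdi b S [Hb1 Hb2] Hser.
  assert (Hbpos : forall k x r, b k = Some (x, r) -> 0 < r) by (intros; eapply Hb1; eauto).
  destruct (compact_cover w R b HR Hw Hbpos) as [N HN].
  { intros y Hy Hwy. destruct (Hb2 y (conj Hy Hwy)) as [k [x [r [H1 H2]]]]. exists k, x, r; auto. }
  set (L := Lb b N).
  assert (HLp : forall p, In p L -> 0 < snd p /\ snd p <= 2 * R).
  { intros p Hp. destruct (Lb_In b N p Hp) as [k [x [r [Hk ->]]]]. destruct (Hb1 k x r Hk). simpl; lra. }
  destruct (list_min_pos L) as [m [Hm Hm']]. intros; apply HLp; auto.
  destruct (pow_unbounded lam (R / m)) as [t Ht]; [lra|].
  assert (Hmain : C * Rpower R (- q) * mb w R <= lsum vq L).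
  { apply (main t); auto.
    - intros p Hp. split; [|apply HLp; auto]. specialize (Hm' p Hp).
      assert (0 < lam ^ t) by (apply pow_lt; lra).
      apply Rle_trans with m; auto. apply Rmult_le_reg_r with (lam ^ t); auto.
      unfold Rdiv. rewrite Rmult_assoc, Rinv_l by lra.
      apply Rmult_le_compat_r with (r := m) in Ht; [|lra]. unfold Rdiv in Ht.
      rewrite Rmult_assoc, Rinv_l, Rmult_1_r in Ht by lra. lra.
    - intros y Hy Hwy. destruct (HN y Hy Hwy) as [k [x [r [Hk [Hbk Hxy]]]]].
      exists (x, 2 * r). split. apply In_Lb with k; auto. simpl; lra. }
  pose proof (V_Lb b N Hbpos) as HV. fold L in HV.
  pose proof (partial_le b S N Hbpos Hser) as HS.
  destruct S as [l|]; simpl in *; auto.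
  assert (C / Cd * Rpower R (- q) * mb w R = (C * Rpower R (- q) * mb w R) / Cd) by (field; lra).
  rewrite H. apply Rmult_le_reg_r with Cd; [lra|]. unfold Rdiv. rewrite Rmult_assoc, Rinv_l, Rmult_1_r by lra.
  assert (Cd * sum_f_R0 (fun k => real (cover_term X d mu q (b k))) N <= Cd * l) by (apply Rmult_le_compat_l; lra). lra.
Qed.


Lemma sum_list_nth (G : option X -> R) (P : list X) : G None = 0 ->
  forall n, (length P <= S n)%nat -> sum_f_R0 (fun k => G (nth_error P k)) n = lsum (fun p => G (Some p)) P.
Proof.
  intro H0. induction P as [|a P IH]; intros n Hn.
  - rewrite (sum_eq _ (fun _ => G None)) by (intros i _; destruct i; reflexivity).
    rewrite H0. simpl. clear Hn. induction n; simpl; lra.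
  - destruct n.
    + simpl in Hn. destruct P; simpl in Hn; [|lia]. simpl. lra.
    + rewrite decomp_sum by lia. simpl pred. simpl nth_error at 1. simpl lsum.
      rewrite (sum_eq _ (fun k => G (nth_error P k))) by (intros; reflexivity).
      rewrite IH; auto. simpl in Hn; lia.
Qed.

Lemma Rpow_div a b q0 : 0 < a -> 0 < b -> Rpower (a / b) q0 = Rpower a q0 * Rpower b (- q0).
Proof. intros. unfold Rdiv. rewrite Rpow_mul, Rpow_inv; auto. apply Rinv_0_lt_compat; auto. Qed.

Lemma content_to_ass q1 C1 : 0 <= q1 -> 0 < C1 ->
  (forall w R0, E w -> 0 < R0 -> lt_diam X d R0 E ->
     hcontent_ge X d mu q1 R0 (fun y => E y /\ ball X d w R0 y) (C1 * Rpower R0 (- q1) * mb w R0)) ->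
  forall x r R0, E x -> 0 < r -> r < R0 -> lt_diam X d R0 E ->
    Rmin (C1 / Cd ^ 2) (1 / Cd ^ 3) * Rpower (r / R0) q1 * mb x R0
      <= real (mu (fun y => nbhd X d E r y /\ ball X d x R0 y)).
Proof.
  intros Hq1 HC1' Hcont x r R0 Hx Hr HrR Hdi.
  set (N := fun y => nbhd X d E r y /\ ball X d x R0 y).
  assert (HNb : borel X d N) by (apply borel_I; [apply borel_nbhd|apply borel_ball]).
  assert (HNs : subset N (ball X d x R0)) by (intros y [_ Hy]; auto).
  assert (HR0 : 0 < R0) by lra.
  assert (Hrp : 0 < Rpower (r / R0) q1) by apply Rpow_pos.
  assert (HmR : 0 < mb x R0) by (apply mb_pos; auto).
  assert (HCd2 : 0 < Cd ^ 2) by (apply pow_lt; lra).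
  assert (HCd3 : 0 < Cd ^ 3) by (apply pow_lt; lra).
  destruct (Rlt_le_dec r (R0 / 4)) as [Hsm|Hbg].
  - set (R1 := R0 / 2).
    destruct (max_sep (fun y => E y /\ d x y <= R1) x R1 (r / 2)) as [P [HP1 [HP2 HP3]]]; try (unfold R1; lra).
    { intros y [_ H]; auto. }
    set (bP := fun k => match nth_error P k with Some p => Some (p, r / 2) | None => None end).
    set (G := fun o : option X => match o with Some p => Rpower (r / 2) (- q1) * mb p (r / 2) | None => 0 end).
    assert (Hser : Rbar_series (fun k => cover_term X d mu q1 (bP k)) (Finite (lsum (fun p => G (Some p)) P))).
    { left. exists (lsum (fun p => G (Some p)) P). split; auto. split.
      - intro n. unfold bP. destruct (nth_error P n) as [p|]; reflexivity.
      - intros eps He. exists (length P). intros n Hn.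
        rewrite (sum_eq _ (fun k => G (nth_error P k))).
        + rewrite (sum_list_nth G P eq_refl n) by lia. unfold Rdist. rewrite Rminus_diag, Rabs_R0; auto.
        + intros i _. unfold bP, G. destruct (nth_error P i); reflexivity. }
    assert (Hadm : admissible_cover X d (fun y => E y /\ ball X d x R1 y) R1 bP).
    { split.
      - intros k p r' Hk. unfold bP in Hk. destruct (nth_error P k); inversion Hk. subst. unfold R1; lra.
      - intros y [Hy Hxy]. destruct (HP3 y (conj Hy Hxy)) as [p [Hp Hpy]].
        destruct (In_nth_error P p Hp) as [k Hk]. exists k, p, (r / 2). unfold bP. rewrite Hk. split; auto. }
    assert (H1 := Hcont x R1 Hx ltac:(unfold R1; lra) ltac:(apply lt_diam_mono with R0; auto; unfold R1; lra) bP _ Hadm Hser).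
    simpl in H1. unfold G in H1. rewrite lsum_scal in H1.
    assert (H2 : lsum (fun p => mb p (r / 2)) P <= Cd * lsum (fun p => mb p (r / 4)) P).
    { rewrite <- lsum_scal. apply lsum_le. intros p _. replace (r / 2) with (2 * (r / 4)) by field. apply HCd; lra. }
    assert (H3 : lsum (fun p => mb p (r / 4)) P <= real (mu N)).
    { assert (E0 : lsum (fun t => real (mu ((fun p => ball X d p (r / 2 / 2)) t))) P = real (mu (Un (fun p => ball X d p (r / 2 / 2)) P))).
      { apply (m_disj_list _ P x R0); auto.
        - intros; apply borel_ball.
        - intros p Hp. apply ball_sub. destruct (HP2 p Hp). unfold R1 in *. lra.
        - apply sep_disj; auto. }
      cbv beta in E0. replace (r / 2 / 2) with (r / 4) in E0 by field. unfold mb at 1. rewrite E0.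
      apply m_mono with x R0; auto.
      - apply borel_Un; intros; apply borel_ball.
      - intros y [p [Hp Hy]]. destruct (HP2 p Hp) as [Hep Hxp]. unfold ball in Hy. split.
        + exists p; split; auto. rewrite d_sym. lra.
        + unfold ball. pose proof (d_tri x p y). unfold R1 in *. lra. }
    assert (H4 : mb x R0 <= Cd * mb x R1).
    { replace Cd with (Cd ^ 1) at 1 by ring. apply dbl_le; try (unfold R1; lra). rewrite d_refl. simpl. unfold R1; lra. }
    assert (E1 : Rpower (r / R0) q1 = Rpower (r / 2) q1 * Rpower R1 (- q1)).
    { replace (r / R0) with ((r / 2) / R1) by (unfold R1; field; lra). apply Rpow_div; unfold R1; lra. }
    assert (E2 : Rpower (r / 2) q1 * Rpower (r / 2) (- q1) = 1) by apply Rpow_opp1.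
    set (A := Rpower (r / 2) (- q1)) in *. set (B := Rpower (r / 2) q1) in *. set (Rm := Rpower R1 (- q1)) in *.
    assert (HA : 0 < A) by apply Rpow_pos. assert (HB : 0 < B) by apply Rpow_pos. assert (HRm : 0 < Rm) by apply Rpow_pos.
    assert (HmR1 : 0 < mb x R1) by (apply mb_pos; unfold R1; lra).
    assert (H5 : C1 * Rm * mb x R1 <= A * (Cd * real (mu N))).
    { eapply Rle_trans. apply H1. apply Rmult_le_compat_l; [lra|]. assert (Cd * lsum (fun p => mb p (r / 4)) P <= Cd * real (mu N)) by (apply Rmult_le_compat_l; lra). lra. }
    assert (H6 : B * (C1 * Rm * mb x R1) <= Cd * real (mu N)).
    { apply Rmult_le_compat_l with (r := B) in H5; [|lra].
      replace (B * (A * (Cd * real (mu N)))) with ((B * A) * (Cd * real (mu N))) in H5 by ring.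
      rewrite E2, Rmult_1_l in H5. exact H5. }
    rewrite E1.
    assert (H7 : Rmin (C1 / Cd ^ 2) (1 / Cd ^ 3) * (B * Rm) * mb x R0 <= C1 / Cd ^ 2 * (B * Rm) * (Cd * mb x R1)).
    { apply Rmult_le_compat; try nra.
      - apply Rmult_le_pos; [apply Rmin_glb; apply Rlt_le, Rdiv_lt_0_compat; lra| nra].
      - apply Rmult_le_compat_r; [nra|]. apply Rmin_l. }
    eapply Rle_trans. apply H7.
    replace (C1 / Cd ^ 2 * (B * Rm) * (Cd * mb x R1)) with ((B * (C1 * Rm * mb x R1)) / Cd) by (field; lra).
    apply Rmult_le_reg_l with Cd; [lra|].
    replace (Cd * (B * (C1 * Rm * mb x R1) / Cd)) with (B * (C1 * Rm * mb x R1)) by (field; lra).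
    assert (0 <= real (mu N)) by (eapply m_nn; eauto).
    nra.
  - assert (H1 : mb x (r / 2) <= real (mu N)).
    { unfold mb. apply m_mono with x R0; auto using borel_ball.
      intros y Hy. unfold ball in Hy. split.
      + exists x; split; auto. rewrite d_sym; lra.
      + unfold ball; lra. }
    assert (H2 : mb x R0 <= Cd ^ 3 * mb x (r / 2)).
    { apply dbl_le; try lra. rewrite d_refl. simpl. lra. }
    assert (H3 : Rpower (r / R0) q1 <= 1).
    { apply Rpow_le1; auto. split. apply Rdiv_lt_0_compat; lra.
      apply Rmult_le_reg_r with R0; auto. unfold Rdiv; rewrite Rmult_assoc, Rinv_l; lra. }
    assert (H4 : Rmin (C1 / Cd ^ 2) (1 / Cd ^ 3) <= 1 / Cd ^ 3) by apply Rmin_r.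
    assert (H5 : 0 <= Rmin (C1 / Cd ^ 2) (1 / Cd ^ 3)).
    { apply Rmin_glb; apply Rlt_le, Rdiv_lt_0_compat; lra. }
    assert (H6 : Rmin (C1 / Cd ^ 2) (1 / Cd ^ 3) * Rpower (r / R0) q1 * mb x R0 <= 1 / Cd ^ 3 * 1 * (Cd ^ 3 * mb x (r / 2))).
    { assert (0 < mb x R0) by auto. apply Rmult_le_compat; try nra. }
    replace (1 / Cd ^ 3 * 1 * (Cd ^ 3 * mb x (r / 2))) with (mb x (r / 2)) in H6 by (field; lra).
    lra.
Qed.

End S.

Theorem corollary5p2 (X : Type) (d : X -> X -> R) (mu : (X -> Prop) -> Rbar)
  (Hd : is_metric X d) (Hc : complete X d) (Hmu : is_borel_measure X d mu)
  (Hb : balls_pos_fin X d mu) (Hdb : doubling X d mu)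
  (E : X -> Prop) (HE : closed X d E) :
  forall a : R, is_glb (assouad_exps X d mu E) a <-> is_glb (content_exps X d mu E) a.
Proof.
  destruct Hdb as [Cd0 HCd0].
  set (Cd := Rmax Cd0 1).
  assert (HCd1 : 1 <= Cd) by apply Rmax_r.
  assert (HCd : forall x r, 0 < r -> mb X d mu x (2 * r) <= Cd * mb X d mu x r).
  { intros x r Hr. specialize (HCd0 x r Hr).
    destruct (mb_spec X d mu Hb x (2 * r)) as [E1 P1]; [lra|].
    destruct (mb_spec X d mu Hb x r) as [E2 P2]; [lra|].
    rewrite E1 in HCd0. simpl in HCd0. fold (mb X d mu x r) in HCd0.
    assert (Cd0 * mb X d mu x r <= Cd * mb X d mu x r) by (apply Rmult_le_compat_r; [lra|apply Rmax_l]).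
    lra. }
  assert (HCdp : 0 < Cd) by lra.
  assert (Hsub : forall q1, content_exps X d mu E q1 -> assouad_exps X d mu E q1).
  { intros q1 [Hq1 [C1 [HC1 Hcont]]]. split; auto.
    exists (Rmin (C1 / Cd ^ 2) (1 / Cd ^ 3)). split.
    { apply Rmin_glb_lt; apply Rdiv_lt_0_compat; try lra; apply pow_lt; lra. }
    intros x r R0 Hx Hr HrR Hdi.
    destruct (fin_sub X d mu Hd Hmu Hb (fun y => nbhd X d E r y /\ ball X d x R0 y) x R0) as [Hf _].
    - apply borel_I; [apply borel_nbhd|apply borel_ball]; auto.
    - intros y [_ Hy]; auto.
    - lra.
    - rewrite Hf. simpl. apply (content_to_ass X d mu Hd Hmu Hb Cd HCd1 HCd E q1 C1); auto. }
  assert (Hsup : forall s q, assouad_exps X d mu E s -> s < q -> content_exps X d mu E q).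
  { intros s q [Hs [c [Hcp HAss]]] Hsq. split; [lra|].
    assert (HCd3 : 0 < Cd ^ 3) by (apply pow_lt; lra).
    assert (HCd4 : 0 < Cd ^ 4) by (apply pow_lt; lra).
    set (K := 2 * Cd ^ 4 / (c / Cd ^ 3)).
    assert (HK : 0 < K) by (unfold K; apply Rdiv_lt_0_compat; [lra|apply Rdiv_lt_0_compat; lra]).
    set (lam := 8 + Rpower K (/ (q - s))).
    assert (Hl8 : 8 <= lam) by (unfold lam; pose proof (Rpow_pos K (/ (q - s))); lra).
    assert (Hlam : K <= Rpower lam (q - s)).
    { assert (Rpower (Rpower K (/ (q - s))) (q - s) = K).
      { rewrite Rpower_mult. rewrite Rinv_l by lra. apply Rpower_1; auto. }
      rewrite <- H at 1. apply Rle_Rpower_l; [lra|]. split. apply Rpow_pos. unfold lam; lra. }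
    set (C := Rmin ((c / Cd ^ 3) * Rpower lam (- s) / (2 * Cd ^ 3 * Rpower 2 q)) (Rpower 2 (- q) / Cd)).
    assert (HC : 0 < C).
    { unfold C. apply Rmin_glb_lt; apply Rdiv_lt_0_compat; try apply Rpow_pos; try lra.
      apply Rmult_lt_0_compat; [apply Rdiv_lt_0_compat; lra|apply Rpow_pos].
      pose proof (Rpow_pos 2 q). nra. }
    exists (C / Cd). split; [apply Rdiv_lt_0_compat; lra|].
    intros w R0 Hw HR0 Hdi.
    apply (content_ok X d mu Hd Hmu Hb Cd HCd1 HCd E s c q lam C); auto; try apply Rmin_l; try apply Rmin_r. }
  assert (Hle : forall m s, (forall q, s < q -> m <= q) -> m <= s).
  { intros m s H. apply Rnot_lt_le; intro Hlt. specialize (H ((s + m) / 2)). lra. }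
  intro a. split.
  - intros [H1 H2]. split.
    + intros q Hq. apply H1, Hsub; auto.
    + intros m' Hm'. apply H2. intros s Hs. apply Hle. intros q Hsq. apply Hm'. eapply Hsup; eauto.
  - intros [H1 H2]. split.
    + intros s Hs. apply Hle. intros q Hsq. apply H1. eapply Hsup; eauto.
    + intros m' Hm'. apply H2. intros q Hq. apply Hm', Hsub; auto.
Qed.
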